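(* For $\theta \in \mathrm{Aut}(\mathbb{F}_{p^m})$, $\eta_1 \in \mathbb{F}_{p^m}^*$, and $\eta_i \in 1 + u^{i-1}\mathbb{F}_{p^m}$ for $2 \le i \le k-1$, define \[ \Theta_{\theta,\eta_1,\dots,\eta_{k-1}} : R_k \to R_k,\qquad \sum_{i=0}^{k-1} a_i u^i \longmapsto \sum_{i=0}^{k-1} \theta(a_i)\Big(\prod_{j=1}^{k-1}\eta_j\Big)^{i} u^i \quad (a_i\in\mathbb{F}_{p^m}). \] Then each $\Theta_{\theta,\eta_1,\dots,\eta_{k-1}}$ is a ring automorphism of $R_k$, and \[ \mathrm{Aut}(R_k)=\{\Theta_{\theta,\eta_1,\dots,\eta_{k-1}} : \theta\in\mathrm{Aut}(\mathbb{F}_{p^m}),\ \eta_1\in\mathbb{F}_{p^m}^*,\ \eta_i\in 1+u^{i-1}\mathbb{F}_{p^m}\ (2\le i\le k-1)\}. \]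
   Context: Let $p$ be a prime, $m,k\ge 1$, $\mathbb{F}_{p^m}$ the finite field with $p^m$ elements, and $R_k=\mathbb{F}_{p^m}[u]/\langle u^k\rangle=\mathbb{F}_{p^m}+u\mathbb{F}_{p^m}+\dots+u^{k-1}\mathbb{F}_{p^m}$ with $u^k=0$. $\mathbb{F}_{p^m}^*$ denotes the nonzero elements of $\mathbb{F}_{p^m}$. *)

(* Defs.v *)
From HB Require Import structures.
From mathcomp Require Import all_boot all_order all_algebra all_field.
Set Implicit Arguments. Unset Strict Implicit. Unset Printing Implicit Defensive.
Import GRing.Theory.
Local Open Scope ring_scope.

(* R_k = F[u]/<u^k>, realized as polynomials of size <= k with multiplication
   modulo 'X^k (mathcomp qpoly); u is 'qX.  Requires k >= 1. *)
Definition Rk (F : fieldType) (k : nat) := {poly %/ ('X^k : {poly F})}.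

Definition is_ring_aut (R : nzRingType) (f : R -> R) : Prop :=
  (forall x y, f (x + y) = f x + f y) /\
  (forall x y, f (x * y) = f x * f y) /\
  f 1 = 1 /\ bijective f.

Definition uR (F : fieldType) (k : nat) : Rk F k := 'qX.
Definition cR (F : fieldType) (k : nat) (c : F) : Rk F k := qpolyC _ c.

Definition admissible_eta (F : fieldType) (k : nat) (eta : nat -> Rk F k) : Prop :=
  forall i, (1 <= i < k)%N ->
    ((i = 1)%N -> exists c : F, c != 0 /\ eta i = cR k c) /\
    ((2 <= i)%N -> exists b : F, eta i = 1 + uR F k ^+ (i - 1) * cR k b).

Definition Theta (F : fieldType) (k : nat) (theta : F -> F) (eta : nat -> Rk F k)
    (x : Rk F k) : Rk F k :=
  \sum_(i < k) cR k (theta ((x : {poly F})`_i))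
               * (\prod_(1 <= j < k) eta j) ^+ i * uR F k ^+ i.

(* Main.v *)
Require Import Defs.
From HB Require Import structures.
From mathcomp Require Import all_boot all_order all_algebra all_field.
From mathcomp Require Import zify.
From Stdlib Require Import FunctionalExtensionality.
Set Implicit Arguments. Unset Strict Implicit. Unset Printing Implicit Defensive.
Import GRing.Theory Pdiv.Ring Pdiv.RingMonic.
Local Open Scope ring_scope.

Section Basics.
Variables (F : fieldType) (k : nat).
Hypothesis k_gt0 : (0 < k)%N.
Local Notation R := (Rk F k).
Local Notation u := (uR F k).

Lemma mkX : mk_monic ('X^k : {poly F}) = 'X^k.
Proof. by rewrite mk_monic_Xn prednK. Qed.

Lemma valM (x y : R) : val (x * y) = rmodp (val x * val y) 'X^k.
Proof.
transitivity (rmodp (val x * val y) (mk_monic ('X^k : {poly F}))); first exact: poly_of_qpolyM.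
by congr rmodp; exact: mkX.
Qed.

Lemma uXE i : u ^+ i = in_qpoly ('X^k : {poly F}) ('X^i).
Proof. by rewrite /uR /qpolyX rmorphXn. Qed.

Lemma val_uX i : (i < k)%N -> val (u ^+ i) = 'X^i.
Proof.
move=> ik; rewrite uXE /=.
have -> : mk_monic ('X^k : {poly F}) = 'X^k by exact: mkX.
by rewrite rmodp_small // !size_polyXn.
Qed.

Lemma uXk : u ^+ k = 0.
Proof.
rewrite uXE; apply: val_inj => /=.
have -> : mk_monic ('X^k : {poly F}) = 'X^k by exact: mkX.
rewrite rmodpp //; exact: monicXn.
Qed.

Lemma uXge i : (k <= i)%N -> u ^+ i = 0.
Proof. by move=> ki; rewrite -(subnK ki) exprD uXk mulr0. Qed.

Lemma uX_neq0 i : (i < k)%N -> u ^+ i != 0.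
Proof.
move=> ik; apply/eqP => /(congr1 val); rewrite val_uX //= => /eqP.
by rewrite -size_poly_eq0 size_polyXn.
Qed.

Lemma val_cR c : val (@cR F k c) = c%:P :> {poly F}.
Proof. by []. Qed.

Lemma cR_inj : injective (@cR F k).
Proof. by move=> a b /(congr1 val); rewrite !val_cR => /polyC_inj. Qed.

Lemma cRD a b : @cR F k (a + b) = @cR F k a + @cR F k b.
Proof. exact: qpolyCD. Qed.
Lemma cRM a b : @cR F k (a * b) = @cR F k a * @cR F k b.
Proof. exact: qpolyCM. Qed.
Lemma cR1 : @cR F k 1 = 1.
Proof. by []. Qed.
Lemma cR0 : @cR F k 0 = 0.
Proof. exact: qpolyC0. Qed.

Lemma size_val (x : R) : (size (val x) <= k)%N.
Proof.
have e : (size (mk_monic ('X^k : {poly F}))).-1 = k by rewrite mkX size_polyXn.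
rewrite -[X in (_ <= X)%N]e; exact: size_npoly x.
Qed.

Lemma decomp (x : R) : x = \sum_(i < k) @cR F k ((val x)`_i) * u ^+ i.
Proof.
apply: val_inj; rewrite raddf_sum /=.
have -> : \sum_(i < k) val (@cR F k (val x)`_i * u ^+ i) = \sum_(i < k) (val x)`_i *: 'X^i.
  apply: eq_bigr => i _; rewrite valM val_uX // val_cR mul_polyC.
  rewrite rmodp_small //.
  by apply: leq_ltn_trans (size_scale_leq _ _) _; rewrite !size_polyXn ltnS.
rewrite -poly_def; apply/polyP => j; rewrite coef_poly; case: ltnP => // kj.
by rewrite nth_default // (leq_trans (size_val x) kj).
Qed.


Lemma cR_coef0 a : (val (@cR F k a))`_0 = a.
Proof. by rewrite val_cR coefC. Qed.

Lemma split0 (z : R) : exists z' : R, z = @cR F k ((val z)`_0) + u * z'.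
Proof.
exists (\sum_(0 <= i < k.-1) @cR F k ((val z)`_i.+1) * u ^+ i).
rewrite {1}(decomp z) -(big_mkord xpredT (fun i => @cR F k ((val z)`_i) * u ^+ i)).
rewrite big_ltn // expr0 mulr1 big_add1 mulr_sumr; congr (_ + _).
by apply: eq_bigr => i _; rewrite exprS mulrCA.
Qed.

Lemma nil_unit (n : R) N : n ^+ N = 0 -> (1 + n) \is a GRing.unit.
Proof.
move=> nN; apply/unitrPr; exists (\sum_(i < N) (- n) ^+ i).
have := subrX1 (- n) N; rewrite exprNn nN mulr0 sub0r => e.
apply: oppr_inj; rewrite e -mulNr; congr (_ * _).
by rewrite opprD addrC.
Qed.

Lemma uz_nil (z : R) : (u * z) ^+ k = 0.
Proof. by rewrite exprMn uXk mul0r. Qed.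

Lemma cR_unit a : a != 0 -> @cR F k a \is a GRing.unit.
Proof.
by move=> a0; apply/unitrPr; exists (@cR F k a^-1); rewrite -cRM divff.
Qed.

Lemma unit_cst a (z : R) : a != 0 -> (@cR F k a + u * z) \is a GRing.unit.
Proof.
move=> a0.
have -> : @cR F k a + u * z = @cR F k a * (1 + u * (@cR F k a^-1 * z)).
  rewrite mulrDr mulr1; congr (_ + _).
  by rewrite mulrCA; congr (_ * _); rewrite mulrA -cRM divff // mul1r.
by rewrite (@unitrM R) cR_unit //; apply: nil_unit (uz_nil _).
Qed.

Lemma valuation (x : R) : x != 0 ->
  exists j (y : R), [/\ (j < k)%N, y \is a GRing.unit & x = u ^+ j * y].
Proof.
move=> x0.
suff H : forall n, forall j (z : R), (j + n = k)%N -> x = u ^+ j * z ->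
  exists j (y : R), [/\ (j < k)%N, y \is a GRing.unit & x = u ^+ j * y].
  by apply: (H k 0 x) => //; rewrite expr0 mul1r.
elim=> [|n IH] j z.
  by rewrite addn0 => -> xe; move: x0; rewrite xe uXk mul0r eqxx.
move=> jn xe; have [z' ze] := split0 z.
have [c0|c0] := eqVneq ((val z)`_0) 0.
  apply: (IH j.+1 z'); first by rewrite addSnnS.
  by rewrite xe ze c0 cR0 add0r exprS mulrA (mulrC _ u).
exists j, z; split=> //; first by rewrite -jn addnS ltnS leq_addr.
by rewrite ze; apply: unit_cst.
Qed.


Lemma approx n : forall j (V z : R), (1 <= j)%N -> (j + n = k - 1)%N ->
  V = 1 + u ^+ j * z ->
  exists b : nat -> F,
    u * \prod_(j.+1 <= i < k) (1 + u ^+ (i - 1) * @cR F k (b i)) = u * V.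
Proof.
elim: n => [|n IH] j V z j1 jn Ve.
  exists (fun _ => 0); rewrite addn0 in jn.
  rewrite big_geq; last by lia.
  rewrite Ve mulr1 mulrDr mulr1 mulrA -exprS uXge ?mul0r ?addr0 //; lia.
have [z' ze] := split0 z.
set b0 := (val z)`_0.
set e := 1 + u ^+ j * @cR F k b0.
have eu : e \is a GRing.unit.
  apply: (@nil_unit _ k); rewrite (_ : j = (j - 1).+1); last by lia.
  by rewrite exprS -mulrA uz_nil.
have [|b' hb'] := IH j.+1 (e^-1 * V) (e^-1 * z') isT ltac:(lia).
  have Ve' : V = e + u ^+ j.+1 * z'.
    by rewrite Ve ze mulrDr addrA mulrA -exprSr.
  by rewrite Ve' mulrDr mulVr // mulrCA.
exists (fun i => if i == j.+1 then b0 else b' i).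
rewrite big_ltn; last by lia.
rewrite eqxx.
have -> : (j.+1 - 1 = j)%N by lia.
rewrite -/e.
rewrite (@eq_big_nat _ _ _ j.+2 k _ (fun i => 1 + u ^+ (i - 1) * @cR F k (b' i))); last first.
  by move=> i /andP[ji _]; rewrite ifN //; apply/eqP; lia.
by rewrite mulrCA hb' mulrCA (mulrA e) mulrV // mul1r.
Qed.

End Basics.

Section Gmor.
Variables (F : fieldType) (k : nat) (theta : F -> F).
Hypotheses (thD : forall x y, theta (x + y) = theta x + theta y)
  (thM : forall x y, theta (x * y) = theta x * theta y) (th1 : theta 1 = 1).
Definition gth (a : F) : Rk F k := @cR F k (theta a).
Lemma gth_zmod : zmod_morphism gth.
Proof.
move=> a b; rewrite /gth.
have th0 : theta 0 = 0 by apply/(addrI (theta 0)); rewrite -thD !addr0.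
have thN : forall x, theta (- x) = - theta x.
  by move=> x; apply/(addrI (theta x)); rewrite -thD !subrr.
by rewrite thD thN /cR qpolyCD qpolyCN.
Qed.
Lemma gth_monoid : monoid_morphism gth.
Proof. by split; rewrite /gth /cR ?th1 // => a b; rewrite thM qpolyCM. Qed.

End Gmor.

Section Part1.
Variables (F : fieldType) (k : nat) (theta : F -> F) (eta : nat -> Rk F k).
Hypothesis k_gt0 : (0 < k)%N.
Hypotheses (thD : forall x y, theta (x + y) = theta x + theta y)
  (thM : forall x y, theta (x * y) = theta x * theta y) (th1 : theta 1 = 1).
Hypothesis adm : admissible_eta eta.
Local Notation R := (Rk F k).
Local Notation u := (uR F k).
Local Notation g := (gth k theta).
HB.instance Definition _ := GRing.isZmodMorphism.Build F (Rk F k) g (gth_zmod k thD).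
HB.instance Definition _ := GRing.isMonoidMorphism.Build F (Rk F k) g (gth_monoid k thM th1).

Definition PP : R := \prod_(1 <= j < k) eta j.
Definition ww : R := PP * u.
Definition EE (p : {poly F}) : R := (map_poly g p).[ww].

Lemma EED p q : EE (p + q) = EE p + EE q.
Proof. by rewrite /EE rmorphD hornerD. Qed.
Lemma EEM p q : EE (p * q) = EE p * EE q.
Proof. by rewrite /EE rmorphM hornerM. Qed.
Lemma EE1 : EE 1 = 1.
Proof. by rewrite /EE rmorph1 hornerC. Qed.
Lemma EEX i : EE 'X^i = ww ^+ i.
Proof. by rewrite /EE map_polyXn hornerXn. Qed.

Lemma ThetaE x : Theta theta eta x = EE (val x).
Proof.
rewrite /Theta /EE (@horner_coef_wide _ k); last first.
  by rewrite size_map_poly size_val.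
apply: eq_bigr => i _; rewrite coef_map /= /ww exprMn mulrA.
by [].
Qed.

Lemma ThetaD x y : Theta theta eta (x + y) = Theta theta eta x + Theta theta eta y.
Proof. by rewrite !ThetaE -EED. Qed.

Lemma Theta1 : Theta theta eta 1 = 1.
Proof. rewrite ThetaE /EE /= map_polyC hornerC; change (gth k theta 1 = 1); by rewrite /gth th1. Qed.

Lemma ww_k : ww ^+ k = 0.
Proof. by rewrite /ww exprMn uXk // mulr0. Qed.

Lemma ThetaM x y : Theta theta eta (x * y) = Theta theta eta x * Theta theta eta y.
Proof.
rewrite !ThetaE valM // -EEM.
set p := val x * val y.
have mX : ('X^k : {poly F}) \is monic by apply: monicXn.
rewrite [in RHS](rdivp_eq mX p) EED EEM EEX ww_k mulr0 add0r.
by [].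
Qed.

Lemma eta_unit j : (1 <= j < k)%N -> eta j \is a GRing.unit.
Proof.
move=> jr; have [h1 h2] := adm jr.
have [j1|j1] := eqVneq j 1%N.
  by have [c [c0 ->]] := h1 j1; apply: cR_unit.
have j2 : (2 <= j)%N.
  by move: jr j1; case/andP; case: (j) => [|[|j']].
have [b ->] := h2 j2.
rewrite (_ : (j - 1 = (j - 2).+1)%N); last by lia.
rewrite exprS -mulrA.
by apply: nil_unit (uz_nil k_gt0 _).
Qed.

Lemma PP_unit : PP \is a GRing.unit.
Proof.
rewrite /PP big_nat_cond; apply: (big_ind (fun x : R => x \is a GRing.unit)).
- exact: unitr1.
- by move=> a b ua ub; rewrite (@unitrM R) ua ub.
- by move=> j /andP[jr _]; apply: eta_unit.
Qed.

Lemma Theta_inj : injective (Theta theta eta).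
Proof.
have TN z : Theta theta eta (- z) = - Theta theta eta z.
  by apply/(addrI (Theta theta eta z)); rewrite -ThetaD !subrr ThetaE /EE rmorph0 horner0.
move=> x y exy; apply/eqP; rewrite -subr_eq0; apply/negP => /negP d0.
have [j [z [jk zu de]]] := valuation k_gt0 d0.
have : Theta theta eta (x - y) = 0 by rewrite ThetaD TN exy subrr.
rewrite de ThetaM (ThetaE (_ ^+ _)) val_uX // EEX /ww exprMn.
have Tzu : Theta theta eta z \is a GRing.unit.
  apply/unitrPr; exists (Theta theta eta z^-1).
  by rewrite -ThetaM mulrV // Theta1.
set U := PP ^+ j * Theta theta eta z.
have Uu : U \is a GRing.unit by rewrite (@unitrM R) (@unitrX R) ?PP_unit.
have -> : PP ^+ j * u ^+ j * Theta theta eta z = U * u ^+ j.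
  by rewrite /U mulrAC.
move=> /(congr1 (fun t => U^-1 * t)); rewrite mulKr // mulr0.
by apply/eqP; apply: uX_neq0.
Qed.
End Part1.

Section Part2.
Variables (F : finFieldType) (k p m : nat) (f : Rk F k -> Rk F k).
Hypotheses (k_gt0 : (0 < k)%N) (pp : prime p) (m_gt0 : (0 < m)%N)
  (cardF : #|F| = (p ^ m)%N).
Hypotheses (fD : forall x y, f (x + y) = f x + f y)
  (fM : forall x y, f (x * y) = f x * f y) (f1 : f 1 = 1) (fbij : bijective f).
Local Notation R := (Rk F k).
Local Notation u := (uR F k).

Lemma f0 : f 0 = 0.
Proof. by apply/(addrI (f 0)); rewrite -fD !addr0. Qed.

Lemma fX x n : f (x ^+ n) = f x ^+ n.
Proof. by elim: n => [|n IH]; rewrite ?expr0 ?f1 // !exprS fM IH. Qed.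

Lemma finj : injective f.
Proof. exact: bij_inj. Qed.

Lemma fconst a : f (@cR F k a) = @cR F k ((val (f (@cR F k a)))`_0).
Proof.
set y := f (@cR F k a).
have [z ze] := split0 k_gt0 y.
set b := (val y)`_0 in ze *.
have charF : p \in [char F] by apply: card_finPcharP cardF pp.
have charR : p \in [char R] by rewrite pchar_qpoly.
have qn : [char R].-nat #|F| by rewrite cardF pnatX pnatE // charR.
have cRq c : @cR F k c ^+ #|F| = @cR F k c by rewrite /cR -rmorphXn expf_card.
have yq : y ^+ #|F| = y by rewrite /y -fX cRq.
move: yq; rewrite ze exprDn_pchar // cRq => /addrI nq.
have H j : (u * z) ^+ (#|F| ^ j) = u * z.
  elim: j => [|j IH]; first by rewrite expn0 expr1.
  by rewrite expnS exprM nq IH.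
have q1 : (1 < #|F|)%N.
  rewrite cardF -(expn0 p) ltn_exp2l //; exact: prime_gt1.
rewrite -(H k) exprMn uXge ?mul0r ?addr0 //.
exact: ltnW (ltn_expl _ q1).
Qed.

Definition th (a : F) : F := (val (f (@cR F k a)))`_0.

Lemma thE a : f (@cR F k a) = @cR F k (th a).
Proof. exact: fconst. Qed.

Lemma th_aut : is_ring_aut th.
Proof.
split; [|split; [|split]].
- move=> a b; apply: (@cR_inj F k); rewrite -thE cRD fD !thE -cRD //.
- move=> a b; apply: (@cR_inj F k); rewrite -thE cRM fM !thE -cRM //.
- by apply: (@cR_inj F k); rewrite -thE cR1 f1.
- apply: injF_bij => a b /(congr1 (@cR F k)); rewrite -!thE.
  by move/finj/(@cR_inj F k).
Qed.

Lemma fu : exists Q : R, f u = u * Q.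
Proof.
have [z ze] := split0 k_gt0 (f u); exists z.
have [c0|c0] := eqVneq ((val (f u))`_0) 0.
  by rewrite ze c0 cR0 add0r.
have := unit_cst k_gt0 z c0; rewrite -ze => fu_u.
have : (f u) ^+ k \is a GRing.unit by rewrite (@unitrX R).
by rewrite -fX uXk // f0 unitr0.
Qed.

Lemma feta : exists eta : nat -> R, admissible_eta eta /\ u * PP eta = f u.
Proof.
have [Q fQ] := fu.
have [k1|k2] := leqP k 1%N.
  have u0 : u = 0 by rewrite -(expr1 u) uXge.
  exists (fun _ => 1); split; last by rewrite fQ u0 !mul0r.
  by move=> i ik; lia.
have [Q'' Qe] := split0 k_gt0 Q.
set Q0 := (val Q)`_0 in Qe.
have Q0n : Q0 != 0.
  apply/eqP => Q00; move: Qe; rewrite Q00 cR0 add0r => Qe.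
  have : f (u ^+ (k - 1)) = f 0.
    rewrite fX fQ Qe mulrA -expr2 exprMn -exprM uXge ?mul0r ?f0 //; lia.
  move/finj/eqP; apply/negP; apply: uX_neq0 => //; lia.
have [|b hb] := @approx F k k_gt0 (k - 2) 1 (@cR F k Q0^-1 * Q) (@cR F k Q0^-1 * Q'')
  isT ltac:(lia).
  by rewrite Qe mulrDr mulrA -cRM mulVf // expr1 -mulrA mulrCA.
exists (fun i => if i == 1%N then @cR F k Q0 else 1 + u ^+ (i - 1) * @cR F k (b i)).
split.
  move=> i ir; split; first by move=> ->; exists Q0.
  by move=> i2; exists (b i); rewrite ifN //; apply/eqP; lia.
rewrite /PP big_ltn // eqxx.
rewrite (@eq_big_nat _ _ _ 2 k _ (fun i => 1 + u ^+ (i - 1) * @cR F k (b i))); last first.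
  by move=> i /andP[i2 _]; rewrite ifN //; apply/eqP; lia.
by rewrite mulrCA hb mulrCA mulrA -mulrA (mulrA (cR k Q0)) -cRM divff // mul1r fQ.
Qed.

Lemma fsum (n : nat) (G : 'I_n -> R) : f (\sum_(i < n) G i) = \sum_(i < n) f (G i).
Proof. exact: (big_morph f fD f0). Qed.

Lemma f_Theta : exists eta, admissible_eta eta /\ f = Theta th eta.
Proof.
have [eta [adm fe]] := feta.
exists eta; split => //; apply: functional_extensionality => x.
rewrite {1}(decomp k_gt0 x) fsum /Theta; apply: eq_bigr => i _.
rewrite fM thE fX -fe exprMn [u ^+ i * _]mulrC mulrA //.
Qed.
End Part2.

Theorem lemma3p1 (p m k : nat) (F : finFieldType) :
  prime p -> (0 < m)%N -> (0 < k)%N -> #|F| = (p ^ m)%N ->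
  (forall (theta : F -> F) (eta : nat -> Rk F k),
      is_ring_aut theta -> admissible_eta eta ->
      is_ring_aut (Theta theta eta)) /\
  (forall f : Rk F k -> Rk F k,
      is_ring_aut f <->
      exists (theta : F -> F) (eta : nat -> Rk F k),
        is_ring_aut theta /\ admissible_eta eta /\ f = Theta theta eta).
Proof.
move=> pp m0 k0 cardF.
have P1 : forall (theta : F -> F) (eta : nat -> Rk F k),
      is_ring_aut theta -> admissible_eta eta ->
      is_ring_aut (Theta theta eta).
  move=> theta eta [thD [thM [th1 _]]] adm.
  split; [|split; [|split]].
  - exact: ThetaD.
  - exact: ThetaM.
  - exact: Theta1.
  - exact: injF_bij (Theta_inj k0 thD thM th1 adm).
split=> // f; split.
  move=> [fD [fM [f1 fb]]].
  have [eta [adm fe]] := f_Theta k0 pp m0 cardF fD fM f1 fb.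
  exists (th f), eta; split=> //; exact: (th_aut k0 pp m0 cardF fD fM f1 fb).
by move=> [theta [eta [thA [adm ->]]]]; apply: P1.
Qed.
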